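(* The intuitionistic modal logic $\mathsf{KM}\oplus\mathsf{LC}$ is exactly the set of formulas valid in the Kripke frame $(\omega,\ge,>)$, i.e. with worlds the natural numbers, intuitionistic order $m\unlhd n$ iff $m\ge n$, and modal accessibility $m\prec n$ iff $m>n$.
   Context: Formulas are built from variables, $\bot,\to,\wedge,\vee,\Box$. In a frame $(W,\unlhd,\prec)$, valuations assign $\unlhd$-upward closed sets to variables, connectives are interpreted in the Heyting algebra of upsets, and $\Box A=\{w\mid\forall x(w\prec x\Rightarrow x\in A)\}$; validity means denoting $W$ under every valuation. $\mathsf{KM}\oplus\mathsf{LC}$ is the smallest set of formulas containing all axioms of intuitionistic propositional logic, $\Box(A\to B)\to(\Box A\to\Box B)$, $(\Box A\to A)\to A$, $\Box A\to((B\to A)\vee B)$ and $(A\to B)\vee(B\to A)$, closed under modus ponens, necessitation and substitution. *)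

(* Defs.v *)
From Stdlib Require Import Arith.

Inductive form : Type :=
| Var : nat -> form
| Bot : form
| Imp : form -> form -> form
| And : form -> form -> form
| Or  : form -> form -> form
| Box : form -> form.

Fixpoint subst (s : nat -> form) (A : form) : form :=
  match A with
  | Var p => s p
  | Bot => Bot
  | Imp B C => Imp (subst s B) (subst s C)
  | And B C => And (subst s B) (subst s C)
  | Or B C => Or (subst s B) (subst s C)
  | Box B => Box (subst s B)
  end.

Inductive ipc_axiom : form -> Prop :=
| ax_K  A B : ipc_axiom (Imp A (Imp B A))
| ax_S  A B C : ipc_axiom (Imp (Imp A (Imp B C)) (Imp (Imp A B) (Imp A C)))
| ax_andE1 A B : ipc_axiom (Imp (And A B) A)
| ax_andE2 A B : ipc_axiom (Imp (And A B) B)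
| ax_andI A B : ipc_axiom (Imp A (Imp B (And A B)))
| ax_orI1 A B : ipc_axiom (Imp A (Or A B))
| ax_orI2 A B : ipc_axiom (Imp B (Or A B))
| ax_orE A B C : ipc_axiom (Imp (Imp A C) (Imp (Imp B C) (Imp (Or A B) C)))
| ax_efq A : ipc_axiom (Imp Bot A).

Inductive KMLC : form -> Prop :=
| kmlc_ipc A : ipc_axiom A -> KMLC A
| kmlc_K A B : KMLC (Imp (Box (Imp A B)) (Imp (Box A) (Box B)))
| kmlc_Lob A : KMLC (Imp (Imp (Box A) A) A)
| kmlc_KM A B : KMLC (Imp (Box A) (Or (Imp B A) B))
| kmlc_LC A B : KMLC (Or (Imp A B) (Imp B A))
| kmlc_mp A B : KMLC (Imp A B) -> KMLC A -> KMLC B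
| kmlc_nec A : KMLC A -> KMLC (Box A)
| kmlc_subst (s : nat -> form) A : KMLC A -> KMLC (subst s A).

Definition upset_val (V : nat -> nat -> Prop) : Prop :=
  forall p w x, x <= w -> V p w -> V p x.

Fixpoint forces (V : nat -> nat -> Prop) (w : nat) (A : form) : Prop :=
  match A with
  | Var p => V p w
  | Bot => False
  | Imp B C => forall x, x <= w -> forces V x B -> forces V x C
  | And B C => forces V w B /\ forces V w C
  | Or B C => forces V w B \/ forces V w C
  | Box B => forall x, x < w -> forces V x B
  end.

Definition omega_valid (A : form) : Prop :=
  forall V, upset_val V -> forall w, forces V w A.

(* Main.v *)
Require Import Defs.
From Stdlib Require Import Arith Lia List Classical ClassicalEpsilon.
Import ListNotations.

Lemma mp A B : KMLC (Imp A B) -> KMLC A -> KMLC B.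
Proof. exact (kmlc_mp A B). Qed.
Lemma thK A B : KMLC (Imp A (Imp B A)).
Proof. apply kmlc_ipc; constructor. Qed.
Lemma thS A B C : KMLC (Imp (Imp A (Imp B C)) (Imp (Imp A B) (Imp A C))).
Proof. apply kmlc_ipc; constructor. Qed.
Lemma thI A : KMLC (Imp A A).
Proof.
  apply (mp _ _ (mp _ _ (thS A (Imp A A) A) (thK A (Imp A A))) (thK A A)).
Qed.
Lemma comp P Q R : KMLC (Imp P Q) -> KMLC (Imp Q R) -> KMLC (Imp P R).
Proof.
  intros H1 H2.
  apply (mp _ _ (mp _ _ (thS P Q R) (mp _ _ (thK _ P) H2)) H1).
Qed.

Fixpoint F (G : list form) (X : form) : form :=
  match G with [] => X | g :: G' => F G' (Imp g X) end.

Lemma L1 G : forall X, KMLC X -> KMLC (F G X).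
Proof. induction G; simpl; auto. intros X H. apply IHG. exact (mp _ _ (thK X a) H). Qed.

Lemma L2 G : forall X Y, KMLC (Imp X Y) -> KMLC (Imp (F G X) (F G Y)).
Proof.
  induction G; simpl; auto. intros X Y H. apply IHG.
  exact (mp _ _ (thS a X Y) (mp _ _ (thK _ a) H)).
Qed.

Lemma L3 G : forall X Y Z, KMLC (Imp X (Imp Y Z)) ->
  KMLC (Imp (F G X) (Imp (F G Y) (F G Z))).
Proof.
  induction G; simpl; auto. intros X Y Z H. apply IHG.
  pose proof (mp _ _ (thK _ a) H) as h1.
  pose proof (mp _ _ (thS a X (Imp Y Z)) h1) as h2.
  exact (comp _ _ _ h2 (thS a Y Z)).
Qed.

Inductive ND : list form -> form -> Prop :=
| nd_hyp G A : In A G -> ND G A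
| nd_thm G A : KMLC A -> ND G A
| nd_impI G A B : ND (A :: G) B -> ND G (Imp A B)
| nd_impE G A B : ND G (Imp A B) -> ND G A -> ND G B.

Lemma F_hyp G A : In A G -> KMLC (F G A).
Proof.
  revert A; induction G; simpl; intros A H; [contradiction|].
  destruct H as [<-|H].
  - apply L1, thI.
  - apply (mp _ _ (L2 G A (Imp a A) (thK A a))). auto.
Qed.

Lemma ND_sound G A : ND G A -> KMLC (F G A).
Proof.
  induction 1.
  - apply F_hyp; auto.
  - apply L1; auto.
  - exact IHND.
  - exact (mp _ _ (mp _ _ (L3 G (Imp A B) A B (thI _)) IHND1) IHND2).
Qed.

Lemma ND_weak G A : ND G A -> forall G', incl G G' -> ND G' A.
Proof.
  induction 1; intros G' Hi.
  - apply nd_hyp; auto.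
  - apply nd_thm; auto.
  - apply nd_impI. apply IHND. intros x [<-|Hx]; [left; auto|right; auto].
  - eapply nd_impE; eauto.
Qed.

Lemma ax G A : ipc_axiom A -> ND G A.
Proof. intros; apply nd_thm, kmlc_ipc; auto. Qed.

Lemma nd_andI G A B : ND G A -> ND G B -> ND G (And A B).
Proof. intros; eapply nd_impE; [eapply nd_impE; [apply ax; apply (ax_andI A B)|]|]; eauto. Qed.
Lemma nd_andE1 G A B : ND G (And A B) -> ND G A.
Proof. intros; eapply nd_impE; [apply ax; apply (ax_andE1 A B)|]; eauto. Qed.
Lemma nd_andE2 G A B : ND G (And A B) -> ND G B.
Proof. intros; eapply nd_impE; [apply ax; apply (ax_andE2 A B)|]; eauto. Qed.
Lemma nd_orI1 G A B : ND G A -> ND G (Or A B).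
Proof. intros; eapply nd_impE; [apply ax; apply (ax_orI1 A B)|]; eauto. Qed.
Lemma nd_orI2 G A B : ND G B -> ND G (Or A B).
Proof. intros; eapply nd_impE; [apply ax; apply (ax_orI2 A B)|]; eauto. Qed.
Lemma nd_orE G A B C : ND G (Or A B) -> ND (A :: G) C -> ND (B :: G) C -> ND G C.
Proof.
  intros H H1 H2.
  eapply nd_impE; [|exact H].
  eapply nd_impE; [|apply nd_impI; exact H2].
  eapply nd_impE; [|apply nd_impI; exact H1].
  apply ax; apply (ax_orE A B C).
Qed.
Lemma nd_botE G A : ND G Bot -> ND G A.
Proof. intros; eapply nd_impE; [apply ax; apply (ax_efq A)|]; eauto. Qed.
Lemma hyp0 G A : ND (A :: G) A.
Proof. apply nd_hyp; left; auto. Qed.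
Lemma hyp1 G A B : ND (B :: A :: G) A.
Proof. apply nd_hyp; right; left; auto. Qed.
Lemma lift G A B : ND G A -> ND (B :: G) A.
Proof. intros H; eapply ND_weak; [exact H|]. intros x Hx; right; auto. Qed.

Lemma box_mono X Y : KMLC (Imp X Y) -> KMLC (Imp (Box X) (Box Y)).
Proof. intros H. exact (mp _ _ (kmlc_K X Y) (kmlc_nec _ H)). Qed.

Lemma thm_up a : KMLC (Imp a (Box a)).
Proof.
  set (X := And a (Box a)).
  apply (ND_sound []).
  apply nd_impI.
  apply (nd_andE2 _ a).
  eapply nd_impE; [apply nd_thm, (kmlc_Lob X)|].
  apply nd_impI. unfold X. apply nd_andI.
  - apply hyp1.
  - eapply nd_impE; [|apply hyp0]. apply nd_thm, box_mono. apply kmlc_ipc, ax_andE1.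
Qed.


Lemma persist V (HV : upset_val V) A : forall w x, x <= w -> forces V w A -> forces V x A.
Proof.
  induction A; simpl; intros w x Hxw H.
  - eapply HV; eauto.
  - exact H.
  - intros y Hy. apply H. lia.
  - destruct H; split; eauto.
  - destruct H; [left|right]; eauto.
  - intros y Hy. apply H. lia.
Qed.

Lemma subst_forces s A : forall V w,
  forces V w (subst s A) <-> forces (fun p w => forces V w (s p)) w A.
Proof.
  induction A; simpl; intros V w.
  - tauto.
  - tauto.
  - split; intros H x Hx H1; apply IHA2; apply H; auto; apply IHA1; auto.
  - rewrite IHA1, IHA2; tauto.
  - rewrite IHA1, IHA2; tauto.
  - split; intros H x Hx; apply IHA; auto.
Qed.

Lemma soundness A : KMLC A -> omega_valid A.
Proof.
  induction 1; unfold omega_valid in *; intros V HV w; simpl.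
  - destruct H; simpl.
    + intros x Hx HA y Hy HB. eapply persist; eauto.
    + intros x Hx H1 y Hy H2 z Hz H3.
      apply (H1 z ltac:(lia) H3 z ltac:(lia)). apply (H2 z ltac:(lia) H3).
    + intros x Hx [H1 H2]; auto.
    + intros x Hx [H1 H2]; auto.
    + intros x Hx H1 y Hy H2. split; auto. eapply persist; eauto.
    + intros x Hx H1; auto.
    + intros x Hx H1; auto.
    + intros x Hx H1 y Hy H2 z Hz [H3|H3].
      * apply (H1 z ltac:(lia) H3).
      * apply (H2 z ltac:(lia) H3).
    + intros x Hx [].
  - intros x Hx H1 y Hy H2 z Hz. apply (H1 z ltac:(lia) z (le_n _)). apply H2; lia.
  - intros x Hx H1.
    assert (forall n, n <= x -> forces V n A) as K; [|apply K; lia].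
    induction n as [n IH] using lt_wf_ind. intros Hn.
    apply (H1 n Hn). intros m Hm. apply IH; lia.
  - intros x Hx H1.
    destruct (classic (forces V x B)) as [HB|HB]; [right; auto|left].
    intros y Hy H2. destruct (Nat.eq_dec y x) as [->|Hne]; [contradiction|].
    apply H1; lia.
  - destruct (classic (exists x, x <= w /\ forces V x A /\ ~ forces V x B)) as [[x [Hx [H1 H2]]]|Hn].
    + right. intros y Hy H3.
      destruct (le_lt_dec x y) as [Hxy|Hxy].
      * exfalso; apply H2. eapply persist; [exact HV| exact Hxy| exact H3].
      * eapply persist; [exact HV| |exact H1]; lia.
    + left. intros x Hx H1. apply NNPP; intros H2; apply Hn; eauto.
  - specialize (IHKMLC1 V HV w). specialize (IHKMLC2 V HV w). simpl in IHKMLC1.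
    exact (IHKMLC1 w (le_n _) IHKMLC2).
  - intros x Hx; auto.
  - apply subst_forces. apply IHKMLC.
    intros p a b Hab Hp. eapply persist; eauto.
Qed.


Lemma extend (A : form) (P : list (form * form)) : forall G, ~ ND G A ->
  exists G', ~ ND G' A /\ incl G G' /\
   (forall x y, In (x, y) P -> ND G' (Imp x y) \/ ND G' (Imp y x)).
Proof.
  induction P as [|[x y] P IH]; intros G HG.
  - exists G; split; [auto|split; [apply incl_refl|intros ? ? []]].
  - destruct (classic (ND (Imp x y :: G) A)) as [H1|H1].
    + destruct (classic (ND (Imp y x :: G) A)) as [H2|H2].
      * exfalso; apply HG. eapply nd_orE; [apply nd_thm, (kmlc_LC x y)|exact H1|exact H2].
      * destruct (IH _ H2) as [G' [HG' [Hi Ht]]].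
        exists G'; split; auto; split.
        { intros z Hz; apply Hi; right; auto. }
        intros a b [Hab|Hab]; auto. inversion Hab; subst.
        right; apply nd_hyp, Hi; left; auto.
    + destruct (IH _ H1) as [G' [HG' [Hi Ht]]].
      exists G'; split; auto; split.
      { intros z Hz; apply Hi; right; auto. }
      intros a b [Hab|Hab]; auto. inversion Hab; subst.
      left; apply nd_hyp, Hi; left; auto.
Qed.

Definition le G x y := ND G (Imp x y).

Lemma le_refl G x : le G x x.
Proof. apply nd_impI, hyp0. Qed.
Lemma le_trans G x y z : le G x y -> le G y z -> le G x z.
Proof.
  unfold le; intros H1 H2. apply nd_impI.
  eapply nd_impE; [apply lift; exact H2|]. eapply nd_impE; [apply lift; exact H1|apply hyp0].
Qed.
Lemma T_up G x y : ND G x -> le G y x.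
Proof. intros; apply nd_impI, lift; auto. Qed.
Lemma T_mp G x y : ND G x -> le G x y -> ND G y.
Proof. intros; eapply nd_impE; eauto. Qed.
Lemma thm_le G x y : KMLC (Imp x y) -> le G x y.
Proof. intros; apply nd_thm; auto. Qed.

Lemma godel G B C : (le G (Imp B C) B \/ le G B (Imp B C)) -> ~ ND G (Imp B C) -> le G (Imp B C) C.
Proof.
  intros [H|H] Hn.
  - unfold le. apply nd_impI. eapply nd_impE; [apply hyp0|].
    eapply nd_impE; [apply lift; exact H|apply hyp0].
  - exfalso; apply Hn. apply nd_impI.
    eapply nd_impE; [|apply hyp0]. eapply nd_impE; [apply lift; exact H|apply hyp0].
Qed.

Lemma cover G X B : (le G X B \/ le G B X) ->
  (le G (Imp X B) X \/ le G X (Imp X B)) -> ~ le G X B -> le G (Box B) X.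
Proof.
  intros H1 H2 Hn.
  destruct H1 as [H1|H1]; [contradiction|].
  pose proof (godel G X B H2 Hn) as Hg.
  unfold le in *. apply nd_impI.
  eapply nd_orE; [eapply nd_impE; [apply nd_thm, (kmlc_KM B X)|apply hyp0]| |].
  - eapply nd_impE; [do 2 apply lift; exact H1|].
    eapply nd_impE; [do 2 apply lift; exact Hg|apply hyp0].
  - apply hyp0.
Qed.

Lemma box_gt G B : ~ ND G B -> ~ le G (Box B) B.
Proof. intros Hn H; apply Hn. eapply nd_impE; [apply nd_thm, (kmlc_Lob B)|exact H]. Qed.

Lemma le_box G B : le G B (Box B).
Proof. apply thm_le, thm_up. Qed.

Definition dec (P : Prop) : bool := if excluded_middle_informative P then true else false.
Lemma decE (P : Prop) : dec P = true <-> P.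
Proof. unfold dec; destruct (excluded_middle_informative P); split; auto; discriminate. Qed.
Lemma decF (P : Prop) : dec P = false <-> ~ P.
Proof. unfold dec; destruct (excluded_middle_informative P); split; auto; try discriminate; tauto. Qed.

Lemma flen_mono {T} (p q : T -> bool) l : (forall x, In x l -> p x = true -> q x = true) ->
  length (filter p l) <= length (filter q l).
Proof.
  induction l as [|a l IH]; simpl; intros H; auto.
  destruct (p a) eqn:Ep; [rewrite (H a (or_introl eq_refl) Ep)|destruct (q a)]; simpl;
  try (apply le_n_S); try (apply le_S); apply IH; auto.
Qed.

Lemma flen_strict {T} (p q : T -> bool) l : (forall x, In x l -> p x = true -> q x = true) ->
  (exists x, In x l /\ q x = true /\ p x = false) ->
  length (filter p l) < length (filter q l).
Proof.
  induction l as [|a l IH]; simpl; intros H [x [Hx [Hq Hp]]]; [contradiction|].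
  destruct Hx as [<-|Hx].
  - rewrite Hq, Hp; simpl. apply le_n_S, flen_mono; auto.
  - destruct (p a) eqn:Ep; [rewrite (H a (or_introl eq_refl) Ep)|destruct (q a)]; simpl.
    + apply le_n_S, IH; eauto.
    + apply le_S, IH; eauto.
    + apply IH; eauto.
Qed.

Lemma flen_ext {T} (p q : T -> bool) l : (forall x, In x l -> p x = q x) ->
  length (filter p l) = length (filter q l).
Proof. intros H; rewrite (filter_ext_in p q l H); auto. Qed.

Lemma flen_split {T} (p q r : T -> bool) l :
  (forall x, In x l -> p x = orb (q x) (r x) /\ andb (q x) (r x) = false) ->
  length (filter p l) = length (filter q l) + length (filter r l).
Proof.
  induction l as [|a l IH]; simpl; intros H; auto.
  destruct (H a (or_introl eq_refl)) as [E1 E2]. rewrite E1.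
  assert (IH' := IH (fun x Hx => H x (or_intror Hx))).
  destruct (q a), (r a); simpl in *; try discriminate; lia.
Qed.

Lemma flen_pos {T} (p : T -> bool) l x : In x l -> p x = true -> 0 < length (filter p l).
Proof.
  induction l as [|a l IH]; simpl; intros Hx Hp; [contradiction|].
  destruct Hx as [<-|Hx]; [rewrite Hp; simpl; lia|destruct (p a); simpl; [lia|auto]].
Qed.

Lemma flen_zero {T} (p : T -> bool) l : (forall x, In x l -> p x = false) -> length (filter p l) = 0.
Proof.
  induction l as [|a l IH]; simpl; intros H; auto. rewrite H by auto; auto.
Qed.


Lemma decT (P : Prop) : P -> dec P = true. Proof. exact (proj2 (decE P)). Qed.
Lemma decT' (P : Prop) : dec P = true -> P. Proof. exact (proj1 (decE P)). Qed.
Lemma decFl (P : Prop) : ~ P -> dec P = false. Proof. exact (proj2 (decF P)). Qed.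
Lemma decF' (P : Prop) : dec P = false -> ~ P. Proof. exact (proj1 (decF P)). Qed.

Definition eqv G x y := le G x y /\ le G y x.

Fixpoint dd G (l : list form) : list form :=
  match l with
  | [] => []
  | x :: l' => if dec (exists y, In y (dd G l') /\ eqv G x y) then dd G l' else x :: dd G l'
  end.

Lemma dd_sub G l y : In y (dd G l) -> In y l.
Proof.
  induction l as [|x l IH]; simpl; auto.
  destruct (dec _); simpl; intuition.
Qed.

Lemma eqv_refl G x : eqv G x x.
Proof. split; apply le_refl. Qed.
Lemma eqv_sym G x y : eqv G x y -> eqv G y x.
Proof. intros [? ?]; split; auto. Qed.
Lemma eqv_trans G x y z : eqv G x y -> eqv G y z -> eqv G x z.
Proof. intros [? ?] [? ?]; split; eapply le_trans; eauto. Qed.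

Lemma dd_ex G l x : In x l -> exists y, In y (dd G l) /\ eqv G x y.
Proof.
  induction l as [|a l IH]; simpl; [tauto|].
  intros Hx. destruct (dec (exists y, In y (dd G l) /\ eqv G a y)) eqn:E.
  - apply decT' in E. destruct Hx as [Hx|Hx]; [subst; exact E|auto].
  - destruct Hx as [Hx|Hx]; [subst a|].
    + exists x; split; [left; auto|apply eqv_refl].
    + destruct (IH Hx) as [y [Hy Hy']]; exists y; split; [right|]; auto.
Qed.

Lemma dd_one G l B : length (filter (fun t => dec (eqv G t B)) (dd G l)) <= 1.
Proof.
  induction l as [|a l IH]; simpl; [lia|].
  destruct (dec (exists y, In y (dd G l) /\ eqv G a y)) eqn:E; auto.
  apply decF' in E. simpl.
  destruct (dec (eqv G a B)) eqn:E2; auto.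
  apply decT' in E2. simpl.
  rewrite flen_zero; auto.
  intros x Hx. apply decFl. intros Hxb. apply E. exists x; split; auto.
  eapply eqv_trans; [exact E2|apply eqv_sym; auto].
Qed.

Lemma dec_iff (P Q : Prop) : (P <-> Q) -> dec P = dec Q.
Proof.
  intros H. destruct (dec Q) eqn:E.
  - apply decE; apply decT' in E; tauto.
  - apply decF; apply decF' in E; tauto.
Qed.

Fixpoint subs (A : form) : list form :=
  A :: match A with
       | Imp B C | And B C | Or B C => subs B ++ subs C
       | Box B => subs B
       | _ => []
       end.

Lemma subs_refl A : In A (subs A).
Proof. destruct A; left; auto. Qed.

Lemma subs_trans A : forall X Y, In X (subs A) -> In Y (subs X) -> In Y (subs A).
Proof.
  induction A; simpl; intros X Y HX HY;
  (destruct HX as [<-|HX]; [exact HY|]); try contradiction;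
  try (apply in_app_iff in HX; destruct HX as [HX|HX]; right; apply in_app_iff; eauto);
  right; eauto.
Qed.

Lemma sub_bin A X Y : (In (Imp X Y) (subs A) \/ In (And X Y) (subs A) \/ In (Or X Y) (subs A)) ->
  In X (subs A) /\ In Y (subs A).
Proof.
  intros H; split; (destruct H as [H|[H|H]]; eapply subs_trans; [exact H| |exact H| |exact H|];
   simpl; right; apply in_app_iff; ((left; apply subs_refl) || (right; apply subs_refl))).
Qed.

Lemma sub_box A X : In (Box X) (subs A) -> In X (subs A).
Proof. intros H; eapply subs_trans; [exact H|]; simpl; right; apply subs_refl. Qed.

Lemma completeness A : ~ KMLC A -> ~ omega_valid A.
Proof.
  intros HA.
  set (S := subs A).
  set (S' := S ++ map (fun p => Imp (fst p) (snd p)) (list_prod S S)).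
  destruct (extend A (list_prod S' S') []) as [G [HG [_ Ht]]].
  { intro H; apply HA. exact (ND_sound _ _ H). }
  assert (inS : forall x, In x S -> In x S').
  { intros; unfold S'; apply in_app_iff; left; auto. }
  assert (inS2 : forall x y, In x S -> In y S -> In (Imp x y) S').
  { intros; unfold S'; apply in_app_iff; right. apply in_map_iff.
    exists (x, y); split; auto. apply in_prod; auto. }
  assert (tot : forall x y, In x S' -> In y S' -> le G x y \/ le G y x).
  { intros x y Hx Hy. apply Ht, in_prod; auto. }
  set (L := dd G S).
  assert (inL : forall u, In u L -> In u S) by (intros; eapply dd_sub; eauto).
  set (f := fun s => length (filter (fun t => dec (~ le G s t)) L)).
  set (N := length (filter (fun t => dec (~ ND G t)) L)).
  assert (fb1 : forall s t, le G s t -> f s <= f t).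
  { intros s t H. apply flen_mono. intros u _ Hu. apply decE; apply decT' in Hu.
    intros Htu; apply Hu; eapply le_trans; eauto. }
  assert (fb2 : forall s t, In s S -> In t S -> ~ le G s t -> f t < f s).
  { intros s t Hs Ht' Hn. apply flen_strict.
    - intros u _ Hu. apply decE; apply decT' in Hu.
      intros Hsu; apply Hu. destruct (tot s t) as [H|H]; [auto|auto|contradiction|].
      eapply le_trans; eauto.
    - destruct (dd_ex G S t Ht') as [y [Hy [Hty Hyt]]].
      exists y; split; auto; split.
      + apply decT. intros Hsy; apply Hn; eapply le_trans; eauto.
      + apply decFl. tauto. }
  assert (fa1 : forall s, ND G s -> f s = N).
  { intros s Hs. apply flen_ext. intros u _. apply dec_iff. split; intros H1 H2; apply H1.
    - apply T_up; auto.
    - exact (T_mp G s u Hs H2). }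
  assert (fa2 : forall s, In s S -> ~ ND G s -> f s < N).
  { intros s Hs Hn. apply flen_strict.
    - intros u _ Hu. apply decE; apply decT' in Hu. intros Hu'; apply Hu; apply T_up; auto.
    - destruct (dd_ex G S s Hs) as [y [Hy [Hsy Hys]]].
      exists y; split; auto; split.
      + apply decT. intros Hy'; apply Hn; eapply T_mp; eauto.
      + apply decFl. tauto. }
  assert (fN : forall s, In s S -> f s <= N).
  { intros s Hs. destruct (classic (ND G s)) as [H|H]; [rewrite fa1; auto|specialize (fa2 s Hs H); lia]. }
  assert (fc : f Bot = 0).
  { apply flen_zero. intros u _. apply decFl. intros H; apply H.
    apply thm_le, kmlc_ipc, ax_efq. }
  assert (fd : forall B, In B S -> In (Box B) S -> ~ ND G B -> f (Box B) = Datatypes.S (f B)).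
  { intros B HB HBB Hn. unfold f.
    rewrite (flen_ext _ (fun t => dec (le G t B))).
    2:{ intros u Hu. apply dec_iff. split.
        - intros H. apply NNPP; intros H2; apply H. apply cover; [apply tot; auto|apply tot; auto|exact H2].
        - intros H H2. apply (box_gt G B Hn). eapply le_trans; eauto. }
    rewrite (flen_split _ (fun t => dec (~ le G B t)) (fun t => dec (eqv G t B))).
    2:{ intros u Hu. destruct (classic (le G u B)) as [H|H];
        destruct (classic (le G B u)) as [H'|H'].
        - rewrite (decT (le G u B) H), (decFl (~ le G B u) ltac:(tauto)),
            (decT (eqv G u B) (conj H H')); auto.
        - rewrite (decT (le G u B) H), (decT (~ le G B u) H'),
            (decFl (eqv G u B) ltac:(unfold eqv; tauto)); auto.
        - rewrite (decFl (le G u B) H), (decFl (~ le G B u) ltac:(tauto)),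
            (decFl (eqv G u B) ltac:(unfold eqv; tauto)); auto.
        - destruct (tot u B); auto; contradiction. }
    assert (H1 := dd_one G S B).
    destruct (dd_ex G S B HB) as [y [Hy Hy']].
    assert (H2 := flen_pos (fun t => dec (eqv G t B)) (dd G S) y Hy (decT _ (eqv_sym _ _ _ Hy'))).
    fold L in H1, H2. lia. }
  set (V := fun p w => w < f (Var p)).
  assert (truth : forall B, In B S -> forall w, w < N -> (forces V w B <-> w < f B)).
  { induction B; intros HB w Hw; simpl.
    - unfold V; tauto.
    - rewrite fc; split; [tauto|lia].
    - destruct (sub_bin A B1 B2 (or_introl HB)) as [H1 H2].
      destruct (classic (le G B1 B2)) as [H|H].
      + assert (f (Imp B1 B2) = N) as -> by (apply fa1; exact H).
        split; [intros; auto|]. intros _ x Hx Hf.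
        apply IHB2; auto; [lia|]. apply IHB1 in Hf; auto; [|lia]. specialize (fb1 _ _ H); lia.
      + assert (Hlt := fb2 _ _ H1 H2 H).
        assert (E : f (Imp B1 B2) = f B2).
        { apply Nat.le_antisymm; apply fb1.
          - apply godel; [apply tot; auto|]. exact H.
          - apply thm_le, thK. }
        rewrite E. split.
        * intros Hf. apply NNPP; intros Hn.
          assert (Hc : forces V (f B2) B2).
          { apply Hf; [lia|]. apply IHB1; auto. specialize (fN B1 H1); lia. }
          apply IHB2 in Hc; auto; [lia|]. specialize (fN B1 H1); lia.
        * intros Hw2 x Hx _. apply IHB2; auto; lia.
    - destruct (sub_bin A B1 B2 (or_intror (or_introl HB))) as [H1 H2].
      rewrite IHB1, IHB2 by auto.
      destruct (tot B1 B2) as [H|H]; auto.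
      + assert (E : f (And B1 B2) = f B1).
        { apply Nat.le_antisymm; apply fb1.
          - apply thm_le, kmlc_ipc, ax_andE1.
          - unfold le. apply nd_impI, nd_andI; [apply hyp0|].
            eapply nd_impE; [apply lift; exact H|apply hyp0]. }
        specialize (fb1 _ _ H). lia.
      + assert (E : f (And B1 B2) = f B2).
        { apply Nat.le_antisymm; apply fb1.
          - apply thm_le, kmlc_ipc, ax_andE2.
          - unfold le. apply nd_impI, nd_andI; [|apply hyp0].
            eapply nd_impE; [apply lift; exact H|apply hyp0]. }
        specialize (fb1 _ _ H). lia.
    - destruct (sub_bin A B1 B2 (or_intror (or_intror HB))) as [H1 H2].
      rewrite IHB1, IHB2 by auto.
      destruct (tot B1 B2) as [H|H]; auto.
      + assert (E : f (Or B1 B2) = f B2).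
        { apply Nat.le_antisymm; apply fb1.
          - unfold le. apply nd_impI. eapply nd_orE; [apply hyp0| |apply hyp0].
            eapply nd_impE; [do 2 apply lift; exact H|apply hyp0].
          - apply thm_le, kmlc_ipc, ax_orI2. }
        specialize (fb1 _ _ H). lia.
      + assert (E : f (Or B1 B2) = f B1).
        { apply Nat.le_antisymm; apply fb1.
          - unfold le. apply nd_impI. eapply nd_orE; [apply hyp0|apply hyp0|].
            eapply nd_impE; [do 2 apply lift; exact H|apply hyp0].
          - apply thm_le, kmlc_ipc, ax_orI1. }
        specialize (fb1 _ _ H). lia.
    - assert (H1 := sub_box A B HB).
      destruct (classic (ND G B)) as [H|H].
      + rewrite (fa1 (Box B)) by (eapply T_mp; [exact H|apply le_box]).
        split; [intros; lia|]. intros _ x Hx. apply IHB; auto; [lia|]. rewrite fa1; auto; lia.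
      + rewrite fd by auto. assert (HB' := fa2 B H1 H). split.
        * intros Hf. apply NNPP; intros Hn.
          assert (Hc : forces V (f B) B) by (apply Hf; lia).
          apply IHB in Hc; auto; lia.
        * intros Hw2 x Hx. apply IHB; auto; lia. }
  intros Hv.
  assert (HAS : In A S) by apply subs_refl.
  assert (HnA : ~ ND G A) by exact HG.
  assert (Hlt := fa2 A HAS HnA).
  assert (Hf : forces V (f A) A).
  { apply Hv. intros p w x Hx Hp. unfold V in *; lia. }
  apply truth in Hf; auto. lia.
Qed.

Theorem theorem5p16 : forall A : form, KMLC A <-> omega_valid A.
Proof.
  intros A; split.
  - apply soundness.
  - intros H. apply NNPP; intros Hn. exact (completeness A Hn H).
Qed.
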